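(* Let $(M,g,S)$, $p$, $u$, $\varphi$, $\alpha_1$ and $e_1,e_2,e_3$ be as in the context. Give each $v\in\alpha_1$ coordinates $(x,y,z)$ by $v=xe_1+ye_2+ze_3$. For $a\in\mathbb R$, the sphere $s_1=\{v\in\alpha_1:\tilde g(v,v)=a\}$ has the equation $$2(\cos\varphi)(x^2-y^2+z^2)+2\sqrt{1-2\cos^2\varphi}\,(xy+yz)=a.$$
   Context: $M$ is a 4-dimensional differentiable manifold with a positive definite metric $g$ and a tensor field $S$ of type $(1,1)$ whose components in some local coordinate system form the matrix with rows $(0,1,0,0)$, $(0,0,1,0)$, $(0,0,0,1)$, $(-1,0,0,0)$; hence $S^4=-\mathrm{id}$, and $g(Su,Sv)=g(u,v)$ for all vector fields $u,v$. The associated metric is $\tilde g(u,v)=g(u,Sv)+g(Su,v)$. Here $p\in M$, $u\in T_pM$ is a $g$-unit vector such that $\{u,Su,S^2u,S^3u\}$ is a basis of $T_pM$, $\varphi=\angle(u,Su)$ (so $\cos\varphi=g(u,Su)$; it is known that $\frac{\pi}{4}<\varphi<\frac{3\pi}{4}$), $\alpha_1=\mathrm{span}\{u,Su,S^2u\}$, and $e_1=u$, $e_2=\frac{(-\cos\varphi)u+Su-(\cos\varphi)S^2u}{\sqrt{1-2\cos^2\varphi}}$, $e_3=S^2u$ (a $g$-orthonormal basis of $\alpha_1$). *)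

(* Defs.v *)
From HB Require Import structures.
From mathcomp Require Import all_boot all_order all_algebra.
From mathcomp Require Import all_classical all_reals all_analysis.
Set Implicit Arguments. Unset Strict Implicit. Unset Printing Implicit Defensive.
Import Order.TTheory GRing.Theory Num.Theory.
Local Open Scope ring_scope.

(* T_pM is modelled by 'cV[R]_4 (coordinates w.r.t. the local coordinate
   frame at p); the metric g at p is given by its Gram matrix G. *)
Definition gform {R : realType} (G : 'M[R]_4) (u v : 'cV[R]_4) : R :=
  (u^T *m G *m v) 0 0.

(* The structure S at p: rows (0,1,0,0),(0,0,1,0),(0,0,0,1),(-1,0,0,0). *)
Definition Smx {R : realType} : 'M[R]_4 :=
  \matrix_(i < 4, j < 4)
    (if (i < 3)%N then (if j == i.+1 :> nat then 1 else 0)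
     else (if j == 0 :> nat then -1 else 0)).

Definition Sop {R : realType} (v : 'cV[R]_4) : 'cV[R]_4 := Smx *m v.

Definition gtilde {R : realType} (G : 'M[R]_4) (u v : 'cV[R]_4) : R :=
  gform G u (Sop v) + gform G (Sop u) v.

Definition Sframe {R : realType} (u : 'cV[R]_4) : 'M[R]_4 :=
  \matrix_(i < 4, j < 4) ((Smx ^+ j *m u) i 0).

(* Main.v *)
Require Import Defs.
From HB Require Import structures.
From mathcomp Require Import all_boot all_order all_algebra.
From mathcomp Require Import all_classical all_reals all_analysis.
From mathcomp Require Import ring lra.
Import Order.TTheory GRing.Theory Num.Theory.
Local Open Scope ring_scope.

Section S.
Variable R : realType.
Implicit Types (G : 'M[R]_4) (v w : 'cV[R]_4).

Lemma gformDl G v1 v2 w : gform G (v1 + v2) w = gform G v1 w + gform G v2 w.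
Proof. by rewrite /gform linearD /= !mulmxDl mxE. Qed.
Lemma gformDr G v w1 w2 : gform G v (w1 + w2) = gform G v w1 + gform G v w2.
Proof. by rewrite /gform mulmxDr mxE. Qed.
Lemma gformZl G a v w : gform G (a *: v) w = a * gform G v w.
Proof. by rewrite /gform linearZ /= -!scalemxAl mxE. Qed.
Lemma gformZr G a v w : gform G v (a *: w) = a * gform G v w.
Proof. by rewrite /gform -scalemxAr mxE. Qed.
Lemma gformNl G v w : gform G (- v) w = - gform G v w.
Proof. by rewrite -scaleN1r gformZl mulN1r. Qed.
Lemma gformNr G v w : gform G v (- w) = - gform G v w.
Proof. by rewrite -scaleN1r gformZr mulN1r. Qed.
Lemma gform_sym G v w : G^T = G -> gform G v w = gform G w v.
Proof.
move=> GT; rewrite /gform.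
transitivity ((v^T *m G *m w)^T 0 0); first by rewrite [RHS]mxE.
by rewrite !trmx_mul !trmxK GT mulmxA.
Qed.
Lemma SopD v w : Sop (v + w) = Sop v + Sop w.
Proof. by rewrite /Sop mulmxDr. Qed.
Lemma SopZ a v : Sop (a *: v) = a *: Sop v.
Proof. by rewrite /Sop scalemxAr. Qed.
Lemma SopN v : Sop (- v) = - Sop v.
Proof. by rewrite /Sop mulmxN. Qed.

Lemma SopE v i : (Sop v) i 0 = if (i < 3)%N then v (inord i.+1) 0 else - v 0 0.
Proof.
rewrite /Sop mxE !big_ord_recl big_ord0 !mxE.
case: i => [[|[|[|[|i]]]] Hi] //=;
rewrite ?mul0r ?mul1r ?mulN1r ?add0r ?addr0 //; congr (v _ 0); apply/val_inj; by rewrite /= inordK.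
Qed.

Lemma S4 v : Sop (Sop (Sop (Sop v))) = - v.
Proof.
apply/matrixP => i j; rewrite ord1 !SopE mxE.
have I1 : ((inord 1 : 'I_4) : nat) = 1%N by rewrite inordK.
have I2 : ((inord 2 : 'I_4) : nat) = 2%N by rewrite inordK.
have I3 : ((inord 3 : 'I_4) : nat) = 3%N by rewrite inordK.
case: i => [[|[|[|[|i]]]] Hi] //=; rewrite ?I1 ?I2 ?I3 /= ?SopE ?I1 ?I2 ?I3 /= ?SopE ?I1 ?I2 ?I3 /= ?SopE ?I1 ?I2 ?I3 /= ?opprK;
 congr (- v _ 0); apply/val_inj => //=; by rewrite inordK.
Qed.

Lemma SframeE (u : 'cV[R]_4) i j : Sframe u i j = (Smx ^+ j *m u) i 0.
Proof. by rewrite /Sframe mxE. Qed.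

Lemma Sframe_mul (u : 'cV[R]_4) (c : R) :
  Sframe u *m \col_(j < 4) (if j == 0 :> nat then c else if j == 1 :> nat then -1
     else if j == 2 :> nat then c else 0) = c *: u - Sop u + c *: Sop (Sop u).
Proof.
apply/matrixP => i j; rewrite ord1 {1}mxE !big_ord_recl big_ord0 !SframeE /=.
rewrite /Sop expr0 expr1 mul1mx !exprS expr0 mulr1 -!mulmxE -!mulmxA.
move: (Smx *m (Smx *m (Smx *m u))) => m3.
move: (Smx *m u) => m1; move: (Smx *m m1) => m2.
rewrite !mxE /=. ring.
Qed.
End S.

Theorem theorem4p2 (R : realType) (G : 'M[R]_4) (u : 'cV[R]_4) (phi : R) :
  G^T = G ->
  (forall v : 'cV[R]_4, v != 0 -> 0 < gform G v v) ->
  (forall v w : 'cV[R]_4, gform G (Sop v) (Sop w) = gform G v w) ->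
  gform G u u = 1 ->
  Sframe u \in unitmx ->
  cos phi = gform G u (Sop u) ->
  pi / 4 < phi < 3 * pi / 4 ->
  let e1 := u in
  let e2 := (Num.sqrt (1 - 2 * cos phi ^+ 2))^-1 *:
              ((- cos phi) *: u + Sop u - cos phi *: Sop (Sop u)) in
  let e3 := Sop (Sop u) in
  forall a x y z : R,
    gtilde G (x *: e1 + y *: e2 + z *: e3) (x *: e1 + y *: e2 + z *: e3) = a
    <->
    2 * cos phi * (x ^+ 2 - y ^+ 2 + z ^+ 2)
      + 2 * Num.sqrt (1 - 2 * cos phi ^+ 2) * (x * y + y * z) = a.
Proof.
move=> GT Gpos GS Guu Hunit Hc _ e1 e2 e3 a x y z.
rewrite /e1 /e2 /e3 {e1 e2 e3}.
move: Hc; set c := cos phi => Hc.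
set s := Num.sqrt _.
have sym v w : gform G v w = gform G w v := @gform_sym R G v w GT.
have g01 : gform G u (Sop u) = c by rewrite Hc.
have g10 : gform G (Sop u) u = c by rewrite sym.
have g11 : gform G (Sop u) (Sop u) = 1 by rewrite GS.
have g12 : gform G (Sop u) (Sop (Sop u)) = c by rewrite GS.
have g21 : gform G (Sop (Sop u)) (Sop u) = c by rewrite sym.
have g22 : gform G (Sop (Sop u)) (Sop (Sop u)) = 1 by rewrite !GS.
have g23 : gform G (Sop (Sop u)) (Sop (Sop (Sop u))) = c by rewrite !GS.
have g02 : gform G u (Sop (Sop u)) = 0.
  have : gform G u (Sop (Sop u)) = - gform G u (Sop (Sop u)).
    by rewrite -{1}GS -GS S4 gformNr sym.
  move=> h; lra.
have g13 : gform G (Sop u) (Sop (Sop (Sop u))) = 0 by rewrite GS.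
have g03 : gform G u (Sop (Sop (Sop u))) = - c by rewrite -GS S4 gformNr g10.
have g20 : gform G (Sop (Sop u)) u = 0 by rewrite sym.
have s2pos : 0 < 1 - 2 * c ^+ 2.
  have v0nz : c *: u - Sop u + c *: Sop (Sop u) != 0.
    apply/eqP => h; move: (@Sframe_mul R u c); rewrite h.
    move/(congr1 (mulmx (invmx (Sframe u)))); rewrite mulKmx // mulmx0.
    move/matrixP/(_ 1 0); rewrite !mxE /= => /eqP; by rewrite oppr_eq0 oner_eq0.
  have E : gform G (c *: u - Sop u + c *: Sop (Sop u)) (c *: u - Sop u + c *: Sop (Sop u)) = 1 - 2 * c ^+ 2.
    rewrite !(gformDl,gformDr,gformZl,gformZr,gformNl,gformNr).
    rewrite Guu g01 g02 g10 g11 g12 g20 g21 g22; ring.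
  by rewrite -E; apply: Gpos.
have s2 : s ^+ 2 = 1 - 2 * c ^+ 2 by rewrite sqr_sqrtr // ltW.
have sgt0 : 0 < s by rewrite sqrtr_gt0.
have ks : s^-1 * s = 1 by rewrite mulVf // gt_eqF.
suff -> : gtilde G (x *: u + y *: (s^-1 *: (- c *: u + Sop u - c *: Sop (Sop u))) + z *: Sop (Sop u))
    (x *: u + y *: (s^-1 *: (- c *: u + Sop u - c *: Sop (Sop u))) + z *: Sop (Sop u)) =
  2 * c * (x ^+ 2 - y ^+ 2 + z ^+ 2) + 2 * s * (x * y + y * z) by [].
rewrite /gtilde (sym (Sop _)).
rewrite !(SopD,SopZ,SopN).
rewrite !(gformDl,gformDr,gformZl,gformZr,gformNl,gformNr).
rewrite g01 g02 g03 g11 g12 g13 g21 g22 g23.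
set k := s^-1.
transitivity (2 * c * (x ^+ 2 + z ^+ 2) + 2 * y * k * (1 - 2 * c ^+ 2) * (x + z)
   - 2 * c * y ^+ 2 * k ^+ 2 * (1 - 2 * c ^+ 2)); first ring.
rewrite -s2.
transitivity (2 * c * (x ^+ 2 + z ^+ 2) + 2 * y * (k * s) * s * (x + z)
   - 2 * c * y ^+ 2 * (k * s) ^+ 2); first ring.
rewrite ks; ring.
Qed.
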